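(* A linkage matching field is uniquely determined by its set of Chow covectors: if $\mathcal{M}$ and $\mathcal{M}'$ are linkage $(n,d)$-matching fields on $L\sqcup R$ ($n\ge d$) with $\{\Omega_\rho(\mathcal{M})\}_\rho=\{\Omega_\rho(\mathcal{M}')\}_\rho$, then $\mathcal{M}=\mathcal{M}'$.
   Context: $L=\{\ell_1,\dots,\ell_n\}$, $R=\{r_1,\dots,r_d\}$; graphs are bipartite on $L\sqcup R$ identified with edge sets. An $(n,d)$-matching field $\mathcal{M}=(M_\sigma)$ assigns to each $d$-subset $\sigma\subseteq L$ a perfect matching $M_\sigma$ between $\sigma$ and $R$; it is linkage if for every $r_i\in R$ and every $(d+1)$-subset $\tau\subseteq L$ there exist distinct $\ell_j,\ell_{j'}\in\tau$ with $M_{\tau\setminus\{\ell_j\}}$ and $M_{\tau\setminus\{\ell_{j'}\}}$ agreeing except on the edges incident with $r_i$. For an $(n-d+1)$-subset $\rho\subseteq L$, the Chow covector $\Omega_\rho(\mathcal{M})$ is the graph with edges $(\ell_j,r)$ for $\ell_j\in\rho$, where $r$ is the node matched to $\ell_j$ in $M_{(L\setminus\rho)\cup\{\ell_j\}}$. *)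

(* Defs.v *)
(* L = 'I_n (nodes l_1..l_n), R = 'I_d (nodes r_1..r_d).
   A bipartite graph on L ⊔ R is identified with its edge set {set 'I_n * 'I_d}. *)
From mathcomp Require Import all_boot.
Set Implicit Arguments. Unset Strict Implicit. Unset Printing Implicit Defensive.

Definition graph (n d : nat) := {set ('I_n * 'I_d)}.

Definition perfect_matching (n d : nat) (sigma : {set 'I_n}) (E : graph n d) : bool :=
  [&& [forall e in E, e.1 \in sigma],
      [forall l in sigma, #|[set r : 'I_d | (l, r) \in E]| == 1] &
      [forall r : 'I_d, #|[set l : 'I_n | (l, r) \in E]| == 1]].

(* An (n,d)-matching field: assigns to each d-subset sigma of L a perfect
   matching M sigma between sigma and R (values on other subsets are irrelevant). *)
Definition matching_field (n d : nat) (M : {set 'I_n} -> graph n d) : Prop :=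
  forall sigma : {set 'I_n}, #|sigma| = d -> perfect_matching sigma (M sigma).

Definition drop_at (n d : nat) (E : graph n d) (r : 'I_d) : graph n d :=
  [set e in E | e.2 != r].

Definition linkage (n d : nat) (M : {set 'I_n} -> graph n d) : Prop :=
  forall (r : 'I_d) (tau : {set 'I_n}), #|tau| = d.+1 ->
    exists j j' : 'I_n, [/\ j \in tau, j' \in tau, j != j' &
      drop_at (M (tau :\ j)) r = drop_at (M (tau :\ j')) r].

Definition chow_covector (n d : nat) (M : {set 'I_n} -> graph n d)
    (rho : {set 'I_n}) : graph n d :=
  [set e : 'I_n * 'I_d | (e.1 \in rho) && (e \in M ((~: rho) :|: [set e.1]))].

Definition chow_covectors (n d : nat) (M : {set 'I_n} -> graph n d) : {set graph n d} :=
  [set chow_covector M rho | rho in [set rho : {set 'I_n} | #|rho| == n - d + 1]].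

(* Main.v *)
Require Import Defs.
From mathcomp Require Import all_boot.
From mathcomp Require Import zify.

Lemma chow_left (n d : nat) (M : {set 'I_n} -> graph n d) (rho : {set 'I_n}) :
  d <= n -> 0 < d -> matching_field M -> #|rho| = n - d + 1 ->
  forall l, (l \in rho) = [exists r, (l, r) \in chow_covector M rho].
Proof.
move=> dn d0 mf cr l.
apply/idP/existsP.
  move=> lr.
  have cs : #|~: rho :|: [set l]| = d.
    rewrite setUC cardsU1 in_setC lr /= cardsCs setCK card_ord cr; lia.
  have /and3P [_ /forallP H _] := mf _ cs.
  have /implyP H1 := H l.
  have /eqP := H1 ltac:(by rewrite !inE eqxx orbT).
  move=> /eqP; rewrite eqn_leq => /andP [_]; rewrite card_gt0 => /set0Pn [r].
  rewrite inE => Hr; exists r; by rewrite inE /= lr.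
by case=> r; rewrite inE /= => /andP [].
Qed.

Theorem corollary3p24 (n d : nat) (M M' : {set 'I_n} -> graph n d) :
  d <= n ->
  matching_field M -> matching_field M' ->
  linkage M -> linkage M' ->
  chow_covectors M = chow_covectors M' ->
  forall sigma : {set 'I_n}, #|sigma| = d -> M sigma = M' sigma.
Proof.
move=> dn mf mf' _ _ Heq sigma cs.
case: d dn M M' mf mf' Heq sigma cs => [|d] dn M M' mf mf' Heq sigma cs.
  by apply/setP => [[l [r Hr]]].
have key : forall rho : {set 'I_n}, #|rho| = n - d.+1 + 1 -> chow_covector M rho = chow_covector M' rho.
  move=> rho cr.
  have : chow_covector M rho \in chow_covectors M'.
    rewrite -Heq; apply/imsetP; exists rho => //; by rewrite inE cr.
  case/imsetP => rho' ; rewrite inE => /eqP cr' E.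
  have Hr : rho = rho'.
    apply/setP => x.
    by rewrite (@chow_left n d.+1 M rho dn (ltn0Sn d) mf cr) (@chow_left n d.+1 M' rho' dn (ltn0Sn d) mf' cr') E.
  by rewrite E Hr.
apply/setP => [[l r]].
have /and3P [/forallP H1 _ _] := mf _ cs.
have /and3P [/forallP H1' _ _] := mf' _ cs.
case: (boolP (l \in sigma)) => ls; last first.
  apply/idP/idP => He.
    by move: (H1 (l, r)); rewrite He /= (negbTE ls).
  by move: (H1' (l, r)); rewrite He /= (negbTE ls).
set rho := ~: sigma :|: [set l].
have cr : #|rho| = n - d.+1 + 1.
  rewrite /rho setUC cardsU1 in_setC ls /= cardsCs setCK card_ord cs; lia.
have Hs : ~: rho :|: [set l] = sigma.
  apply/setP => x; rewrite /rho !inE negb_or negbK.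
  by case: (eqVneq x l) => [->|]; rewrite ?ls ?andbT ?orbF ?orbT.
have E := key _ cr.
have : ((l, r) \in chow_covector M rho) = ((l, r) \in chow_covector M' rho) by rewrite E.
have lr : l \in rho by rewrite /rho !inE eqxx orbT.
by rewrite /chow_covector !inE /= Hs eqxx orbT.
Qed.
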